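(* Let $A$ be a set of positive integers with $1\in A$. Then $G(0,A)=0$ and, for every $n\ge1$, $G(n,A)=G(n-1,A)+x$, where $x$ is the smallest element of $A$ with $\mathrm{gap}(x)>G(n-1,A)$ (if no such $x$ exists, then no integer causes the greedy algorithm to use $n$ or more coins).
   Context: For $x\in A$, let $\mathrm{gap}(x)=x'-x$ where $x'$ is the smallest element of $A$ greater than $x$, with $\mathrm{gap}(x)=\infty$ if $x=\max A$. The greedy change-making algorithm with coin values $A$, applied to a nonnegative integer $s$, uses no coins if $s=0$, and otherwise selects the largest $c\in A$ with $c\le s$ and then recursively makes change for $s-c$; the number of coins it uses is the total number of selections made. For $n\ge0$, $G(n,A)$ denotes the smallest nonnegative integer $s$ for which the greedy change-making algorithm with coin values $A$ uses at least $n$ coins. *)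

(* Defs.v *)
From mathcomp Require Import all_boot.
Set Implicit Arguments.
Unset Strict Implicit.
Unset Printing Implicit Defensive.

Fixpoint maxcoin (A : pred nat) (s : nat) : nat :=
  match s with
  | 0 => 0
  | s'.+1 => if A s'.+1 then s'.+1 else maxcoin A s'
  end.

Fixpoint greedy_fuel (A : pred nat) (f s : nat) : nat :=
  match f with
  | 0 => 0
  | f'.+1 =>
      if s == 0 then 0
      else let c := maxcoin A s in
           if c == 0 then 0 else (greedy_fuel A f' (s - c)).+1
  end.

(* Number of coins used by the greedy algorithm on s.  Each step removes a
   coin c >= 1 (when 1 \in A), so fuel s suffices. *)
Definition greedy (A : pred nat) (s : nat) : nat := greedy_fuel A s s.

(* s = G(n, A): the smallest s on which greedy uses at least n coins. *)
Definition isG (A : pred nat) (n s : nat) : Prop :=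
  n <= greedy A s /\ forall t, n <= greedy A t -> s <= t.

(* gap(x) = d, with d = None meaning infinity (x = max A), and
   d = Some k meaning the next element of A above x is x + k. *)
Definition is_gap (A : pred nat) (x : nat) (d : option nat) : Prop :=
  match d with
  | None => forall y, A y -> y <= x
  | Some k => 0 < k /\ A (x + k) /\ forall y, A y -> x < y -> x + k <= y
  end.

Definition gap_gt (A : pred nat) (x g : nat) : Prop :=
  exists d, is_gap A x d /\ (if d is Some k then g < k else True).

(* Main.v *)
From Stdlib Require Import Classical.
Require Import Defs.
From mathcomp Require Import all_boot.
From mathcomp Require Import zify.

Lemma fuel_eq (A : pred nat) f1 f2 s : s <= f1 -> s <= f2 ->
  greedy_fuel A f1 s = greedy_fuel A f2 s.
Proof.
elim: f1 f2 s => [|f IH] [|f'] s /= H1 H2.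
- by [].
- by move: H1; rewrite leqn0 => /eqP ->.
- by move: H2; rewrite leqn0 => /eqP ->.
- case: (s == 0) => //.
  case: eqP => // /eqP c0.
  rewrite (IH f'); first by [].
  + move: H1 c0; clear; lia.
  + move: H2 c0; clear; lia.
Qed.

Lemma maxcoin_spec (A : pred nat) (h1 : A 1) s : 0 < s ->
  [/\ A (maxcoin A s), 0 < maxcoin A s, maxcoin A s <= s &
      forall y, A y -> y <= s -> y <= maxcoin A s].
Proof.
elim: s => [|s IH] // _ /=.
case As: (A s.+1).
- split=> //. 
- case: s IH As => [|s] IH As; first by rewrite h1 in As.
  have [IH1 IH2 IH3 IH4] := IH isT.
  split=> //; first by apply: leqW.
  move=> y Ay; rewrite leq_eqVlt => /orP [/eqP Ey|]; first by rewrite -Ey Ay in As.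
  by rewrite ltnS; apply: IH4.
Qed.

Lemma greedy_eq (A : pred nat) (h1 : A 1) s : 0 < s ->
  greedy A s = (greedy A (s - maxcoin A s)).+1.
Proof.
move=> s0; have [M1 M2 M3 M4] := maxcoin_spec A h1 _ s0.
rewrite /greedy; case: s s0 M1 M2 M3 M4 => [|s] //= _ M1 M2 M3 M4.
have -> : (maxcoin A s.+1 == 0) = false by apply/negbTE; rewrite -lt0n.
congr S; apply: fuel_eq => //.
rewrite leq_subLR; move: M2; clear; lia.
Qed.

Lemma key (A : pred nat) (h1 : A 1) n g t : 1 <= n -> isG A n.-1 g ->
  n <= greedy A t ->
  A (maxcoin A t) /\ gap_gt A (maxcoin A t) g /\ g + maxcoin A t <= t.
Proof.
move=> n1 [_ Gmin] nt.
have t0 : 0 < t.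
  case: t nt => // ; rewrite /greedy /=; move: n1; clear; lia.
have [M1 M2 M3 M4] := maxcoin_spec A h1 _ t0.
have gr : g <= t - maxcoin A t.
  apply: Gmin; move: nt; rewrite greedy_eq //; move: n1; clear; lia.
split=> //; split; last by move: gr M3; clear; lia.
set c := maxcoin A t in M1 M2 M3 M4 gr *.
case: (classic (exists y, A y && (c < y))) => [ex|nex].
- case: (ex_minnP ex) => y0 /andP [Ay0 cy0] ymin.
  have ty0 : t < y0.
    rewrite ltnNge; apply/negP => yt.
    have := M4 _ Ay0 yt; move: cy0; clear; lia.
  exists (Some (y0 - c)); split; last by move: gr ty0 M3; clear; lia.
  split; first by move: cy0; clear; lia.
  have E : c + (y0 - c) = y0 by move: cy0; clear; lia.
  rewrite E; split; first exact: Ay0.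
  move=> y Ay cy; apply: ymin; by rewrite Ay cy.
- exists None; split=> // y Ay; rewrite leqNgt; apply/negP => cy.
  by apply: nex; exists y; rewrite Ay cy.
Qed.

Theorem mainTheorem9 (A : pred nat)
  (hpos : forall x, A x -> 0 < x) (h1 : A 1) :
  isG A 0 0 /\
  forall n g, 1 <= n -> isG A n.-1 g ->
    (forall x, A x -> gap_gt A x g ->
       (forall y, A y -> gap_gt A y g -> x <= y) ->
       isG A n (g + x))
    /\ ((forall x, A x -> ~ gap_gt A x g) -> forall s, greedy A s < n).
Proof.
split; first by split.
move=> n g n1 HG; split.
- move=> x Ax [d [gd gg]] xmin; split.
  + have x0 := hpos _ Ax.
    have s0 : 0 < g + x by move: x0; clear; lia.
    have [M1 M2 M3 M4] := maxcoin_spec A h1 _ s0.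
    have mx : maxcoin A (g + x) = x.
      apply/eqP; rewrite eqn_leq; rewrite M4 ?leq_addl // andbT.
      rewrite leqNgt; apply/negP => xm.
      case: d gd gg => [k|] /= gd gg.
      * case: gd => _ [_ H]; have := H _ M1 xm; move: M3 gg; clear; lia.
      * have := gd _ M1; move: xm; clear; lia.
    rewrite greedy_eq // mx addnK.
    case: HG => HG _; move: HG n1; clear; lia.
  + move=> t nt; have [Ac [gc le]] := key A h1 _ _ _ n1 HG nt.
    apply: leq_trans le; rewrite leq_add2l; exact: xmin.
- move=> H s; rewrite ltnNge; apply/negP => ns.
  have [Ac [gc _]] := key A h1 _ _ _ n1 HG ns.
  exact: (H _ Ac gc).
Qed.
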